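(* Let $R$ be a ring with local units and $S\subseteq R$ a subring. Let $E$ be a set of local units of $R$ that is closed under joins $e_1\vee e_2=e_1+e_2-e_1e_2$ and meets $e_1\wedge e_2=e_1e_2$. Suppose: (1) $E\cap S$ is a set of local units for $S$; (2) $eSe=eRe$ for all $e\in E\cap S$; (3) for every $e\in E$ there exist an index set $I$, elements $e_i\in E\cap S$ ($i\in I$) and a surjective left $R$-module homomorphism $\bigoplus_{i\in I}Re_i\to Re$. Then $S$ and $R$ are Morita equivalent.
   Context: A ring with local units is a (not necessarily unital) ring $R$ together with a set $E\subseteq R$ of pairwise commuting idempotents such that $R=\bigcup_{e\in E}eRe$; $E$ is called a set of local units. The module category of such $R$ consists of left $R$-modules $M$ with $RM=M$ and the usual homomorphisms. Two rings with local units are Morita equivalent if these module categories are equivalent. *)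

(* Defs.v *)
From Stdlib Require Import List ProofIrrelevance.
Import ListNotations.
Set Implicit Arguments.

Record NURing := {
  rcar :> Type;
  rzero : rcar;
  radd : rcar -> rcar -> rcar;
  ropp : rcar -> rcar;
  rmul : rcar -> rcar -> rcar;
  raddA : forall x y z, radd x (radd y z) = radd (radd x y) z;
  raddC : forall x y, radd x y = radd y x;
  radd0 : forall x, radd x rzero = x;
  raddN : forall x, radd x (ropp x) = rzero;
  rmulA : forall x y z, rmul x (rmul y z) = rmul (rmul x y) z;
  rmulDl : forall x y z, rmul (radd x y) z = radd (rmul x z) (rmul y z);
  rmulDr : forall x y z, rmul x (radd y z) = radd (rmul x y) (rmul x z)
}.
Arguments rzero {_}.
Arguments radd {_}.
Arguments ropp {_}.
Arguments rmul {_}.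

Definition local_units (R : NURing) (E : R -> Prop) : Prop :=
  (forall e, E e -> rmul e e = e) /\
  (forall e f, E e -> E f -> rmul e f = rmul f e) /\
  (forall x : R, exists e, E e /\ exists y, x = rmul (rmul e y) e).

Record is_subring (R : NURing) (S : R -> Prop) : Prop := {
  sub0 : S rzero;
  subD : forall {x y}, S x -> S y -> S (radd x y);
  subN : forall {x}, S x -> S (ropp x);
  subM : forall {x y}, S x -> S y -> S (rmul x y)
}.

Lemma sig_eq_val (A : Type) (P : A -> Prop) (x y : {a | P a}) :
  proj1_sig x = proj1_sig y -> x = y.
Proof.
  destruct x as [x hx], y as [y hy]; simpl; intros ->.
  f_equal; apply proof_irrelevance.
Qed.

Section Sub.
Variables (R : NURing) (S : R -> Prop) (HS : is_subring R S).
Let T := {x : R | S x}.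
Definition s_zero : T := exist _ rzero (sub0 HS).
Definition s_add (x y : T) : T :=
  exist _ (radd (proj1_sig x) (proj1_sig y)) (subD HS (proj2_sig x) (proj2_sig y)).
Definition s_opp (x : T) : T := exist _ (ropp (proj1_sig x)) (subN HS (proj2_sig x)).
Definition s_mul (x y : T) : T :=
  exist _ (rmul (proj1_sig x) (proj1_sig y)) (subM HS (proj2_sig x) (proj2_sig y)).

Lemma s_addA x y z : s_add x (s_add y z) = s_add (s_add x y) z.
Proof. apply sig_eq_val; apply raddA. Qed.
Lemma s_addC x y : s_add x y = s_add y x.
Proof. apply sig_eq_val; apply raddC. Qed.
Lemma s_add0 x : s_add x s_zero = x.
Proof. apply sig_eq_val; apply radd0. Qed.
Lemma s_addN x : s_add x (s_opp x) = s_zero.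
Proof. apply sig_eq_val; apply raddN. Qed.
Lemma s_mulA x y z : s_mul x (s_mul y z) = s_mul (s_mul x y) z.
Proof. apply sig_eq_val; apply rmulA. Qed.
Lemma s_mulDl x y z : s_mul (s_add x y) z = s_add (s_mul x z) (s_mul y z).
Proof. apply sig_eq_val; apply rmulDl. Qed.
Lemma s_mulDr x y z : s_mul x (s_add y z) = s_add (s_mul x y) (s_mul x z).
Proof. apply sig_eq_val; apply rmulDr. Qed.

Definition subNURing : NURing :=
  {| rcar := T; rzero := s_zero; radd := s_add; ropp := s_opp; rmul := s_mul;
     raddA := s_addA; raddC := s_addC; radd0 := s_add0; raddN := s_addN;
     rmulA := s_mulA; rmulDl := s_mulDl; rmulDr := s_mulDr |}.
End Sub.

(** Left R-modules M with RM = M (every element is a finite sum of r m's). *)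
Record Module (R : NURing) := {
  mcar :> Type;
  mzero : mcar;
  madd : mcar -> mcar -> mcar;
  mopp : mcar -> mcar;
  mact : R -> mcar -> mcar;
  maddA : forall x y z, madd x (madd y z) = madd (madd x y) z;
  maddC : forall x y, madd x y = madd y x;
  madd0 : forall x, madd x mzero = x;
  maddN : forall x, madd x (mopp x) = mzero;
  mactDl : forall r s x, mact (radd r s) x = madd (mact r x) (mact s x);
  mactDr : forall r x y, mact r (madd x y) = madd (mact r x) (mact r y);
  mactM : forall r s x, mact (rmul r s) x = mact r (mact s x);
  munital : forall x, exists l : list (R * mcar),
      x = fold_right (fun p acc => madd (mact (fst p) (snd p)) acc) mzero l
}.
Arguments mzero {_ _}.
Arguments madd {_ _}.
Arguments mopp {_ _}.
Arguments mact {_ _}.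

Record Hom (R : NURing) (M N : Module R) := {
  hfun :> M -> N;
  hadd : forall x y, hfun (madd x y) = madd (hfun x) (hfun y);
  hact : forall r x, hfun (mact r x) = mact r (hfun x)
}.

Definition idHom (R : NURing) (M : Module R) : Hom M M :=
  {| hfun := fun x => x; hadd := fun x y => eq_refl; hact := fun r x => eq_refl |}.

Definition compHom (R : NURing) (M N P : Module R) (g : Hom N P) (f : Hom M N) : Hom M P.
Proof.
  refine {| hfun := fun x => g (f x) |}.
  - intros x y; rewrite (hadd f), (hadd g); reflexivity.
  - intros r x; rewrite (hact f), (hact g); reflexivity.
Defined.

Record Functor (R S : NURing) := {
  Fobj :> Module R -> Module S;
  Fhom : forall M N : Module R, Hom M N -> Hom (Fobj M) (Fobj N);
  Fext : forall M N (f g : Hom M N), (forall x, f x = g x) ->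
           forall y, Fhom f y = Fhom g y;
  Fid : forall M y, Fhom (idHom M) y = y;
  Fcomp : forall M N P (f : Hom M N) (g : Hom N P) y,
           Fhom (compHom g f) y = Fhom g (Fhom f y)
}.
Arguments Fhom {_ _} _ {_ _}.

Record NatIsoId (R S : NURing) (F : Functor R S) (G : Functor S R) := {
  eta : forall M : Module R, Hom (G (F M)) M;
  etainv : forall M : Module R, Hom M (G (F M));
  eta_inv1 : forall M x, eta M (etainv M x) = x;
  eta_inv2 : forall M y, etainv M (eta M y) = y;
  eta_nat : forall M N (f : Hom M N) y,
      eta N (Fhom G (Fhom F f) y) = f (eta M y)
}.

Definition Morita_equivalent (R S : NURing) : Prop :=
  exists (F : Functor R S) (G : Functor S R),
    inhabited (NatIsoId F G) /\ inhabited (NatIsoId G F).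

(** Elements of the direct sum are
    finitely supported families f : I -> R with f i in R e_i; the module
    operations are pointwise. *)
Definition in_left_ideal {R : NURing} (e x : R) : Prop := exists r, x = rmul r e.

Definition dsum_elem {R : NURing} {I : Type} (ei : I -> R) (f : I -> R) : Prop :=
  (forall i, in_left_ideal (ei i) (f i)) /\
  exists l : list I, forall i, ~ In i l -> f i = rzero.

Definition surj_hom_from_dsum {R : NURing} {I : Type} (ei : I -> R) (e : R) : Prop :=
  exists phi : (I -> R) -> R,
    (forall f, dsum_elem ei f -> in_left_ideal e (phi f)) /\
    (forall f g, dsum_elem ei f -> dsum_elem ei g ->
        phi (fun i => radd (f i) (g i)) = radd (phi f) (phi g)) /\
    (forall r f, dsum_elem ei f ->
        phi (fun i => rmul r (f i)) = rmul r (phi f)) /\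
    (forall x, in_left_ideal e x -> exists f, dsum_elem ei f /\ phi f = x).

(* Main.v *)
Require Import Defs.
From Stdlib Require Import List ProofIrrelevance FunctionalExtensionality ClassicalEpsilon.
Import ListNotations.
Set Implicit Arguments.

Section Gen.
Variable T : NURing.
Implicit Types x y z a b : T.

Lemma radd0l x : radd rzero x = x.
Proof. rewrite raddC; apply radd0. Qed.
Lemma raddNl x : radd (ropp x) x = rzero.
Proof. rewrite raddC; apply raddN. Qed.
Lemma radd_cancel x y z : radd x y = radd x z -> y = z.
Proof.
  intro H. rewrite <- (radd0l y), <- (radd0l z), <- (raddNl x), <- !raddA, H. reflexivity.
Qed.
Lemma mul0r x : rmul rzero x = rzero.
Proof.
  apply (radd_cancel (rmul rzero x)). rewrite radd0, <- rmulDl, radd0. reflexivity.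
Qed.
Lemma mulr0 x : rmul x rzero = rzero.
Proof.
  apply (radd_cancel (rmul x rzero)). rewrite radd0, <- rmulDr, radd0. reflexivity.
Qed.
Lemma mulrN x y : rmul x (ropp y) = ropp (rmul x y).
Proof.
  apply (radd_cancel (rmul x y)). rewrite <- rmulDr, !raddN, mulr0. reflexivity.
Qed.

Definition join a b : T := radd (radd a b) (ropp (rmul a b)).

Lemma join_l a b : rmul a a = a -> rmul a (join a b) = a.
Proof.
  intro Ha. unfold join. rewrite rmulDr, mulrN, rmulDr, rmulA, Ha.
  rewrite <- raddA, raddN, radd0. reflexivity.
Qed.
Lemma join_r a b : rmul b b = b -> rmul a b = rmul b a -> rmul b (join a b) = b.
Proof.
  intros Hb Hab. unfold join. rewrite rmulDr, mulrN, rmulDr, Hb.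
  rewrite rmulA, <- Hab, <- rmulA, Hb.
  rewrite (raddC _ (rmul a b) b), <- raddA, raddN, radd0. reflexivity.
Qed.
End Gen.
Arguments join {T}.

Section GenMod.
Variable T : NURing.
Variable M : Module T.
Implicit Types x y z : M.

Lemma madd0l x : madd mzero x = x.
Proof. rewrite maddC; apply madd0. Qed.
Lemma maddNl x : madd (mopp x) x = mzero.
Proof. rewrite maddC; apply maddN. Qed.
Lemma madd_cancel x y z : madd x y = madd x z -> y = z.
Proof.
  intro H. rewrite <- (madd0l y), <- (madd0l z), <- (maddNl x), <- !maddA, H. reflexivity.
Qed.
Lemma madd_idem x : madd x x = x -> x = mzero.
Proof. intro H. apply (madd_cancel x). rewrite madd0; exact H. Qed.
Lemma mact_r0 (r : T) : mact r (@mzero _ M) = mzero.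
Proof. apply madd_idem. rewrite <- mactDr, madd0. reflexivity. Qed.
Lemma mact_0m x : mact rzero x = mzero.
Proof. apply madd_idem. rewrite <- mactDl, radd0. reflexivity. Qed.
Lemma mopp_unique x y : madd x y = mzero -> y = mopp x.
Proof. intro H. apply (madd_cancel x). rewrite H, maddN. reflexivity. Qed.
Lemma mact_opp (r : T) x : mact r (mopp x) = mopp (mact r x).
Proof. apply mopp_unique. rewrite <- mactDr, maddN. apply mact_r0. Qed.
Lemma mopp_add x y : mopp (madd x y) = madd (mopp x) (mopp y).
Proof.
  symmetry; apply mopp_unique.
  rewrite (maddC _ (mopp x)), maddA, <- (maddA _ x), maddN, madd0, maddN. reflexivity.
Qed.

Lemma unit_fix (U : T -> Prop) (HU : local_units T U)
  (HJ : forall a b, U a -> U b -> U (join a b)) (m : M) :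
  exists e, U e /\ mact e m = m.
Proof.
  destruct HU as [Hid [Hc Hex]].
  destruct (munital _ m) as [l ->].
  induction l as [|[r m'] l IH]; simpl.
  - destruct (Hex rzero) as [e [He _]]. exists e; split; [exact He| apply mact_r0].
  - destruct IH as [e [He Hm]].
    destruct (Hex r) as [f [Hf [y Hy]]].
    assert (Hfr : rmul f r = r).
    { rewrite Hy, !rmulA, (Hid f Hf). reflexivity. }
    exists (join f e). split; [apply HJ; assumption|].
    rewrite mactDr. f_equal.
    + rewrite <- mactM. f_equal. rewrite <- Hfr at 1. rewrite rmulA.
      rewrite (Hc _ _ (HJ _ _ Hf He) Hf), join_l; auto.
    + rewrite <- Hm at 1. rewrite <- mactM, (Hc _ _ (HJ _ _ Hf He) He), join_r; auto.
Qed.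
End GenMod.

Lemma hom0 (T : NURing) (M N : Module T) (h : Hom M N) : h mzero = mzero.
Proof. apply madd_idem. rewrite <- hadd, madd0. reflexivity. Qed.
Lemma radd_idem (T : NURing) (x : T) : radd x x = x -> x = rzero.
Proof. intro H. apply (@radd_cancel T x). rewrite radd0; exact H. Qed.
Lemma madd_swap (T : NURing) (M : Module T) (a b c d : M) :
  madd (madd a b) (madd c d) = madd (madd a c) (madd b d).
Proof.
  rewrite <- !maddA. f_equal. rewrite !maddA. f_equal. apply maddC.
Qed.

Section NatIso.
Variables (A B : NURing) (F : Functor A B) (G : Functor B A)
 (alpha : forall M : Module A, Hom M (G (F M)))
 (inj : forall M x y, alpha M x = alpha M y -> x = y)
 (surj : forall M y, exists x, alpha M x = y)
 (nat : forall M N (f : Hom M N) x, Fhom G (Fhom F f) (alpha M x) = alpha N (f x)).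

Definition beta (M : Module A) (y : G (F M)) : M :=
  proj1_sig (constructive_indefinite_description _ (surj M y)).
Lemma betaK M y : alpha M (beta M y) = y.
Proof. unfold beta; destruct (constructive_indefinite_description _ _); auto. Qed.

Definition betaH (M : Module A) : Hom (G (F M)) M.
Proof.
  refine (@Build_Hom A (G (F M)) M (beta M) _ _).
  - intros x y. apply inj. rewrite hadd, !betaK. reflexivity.
  - intros r x. apply inj. rewrite hact, !betaK. reflexivity.
Defined.

Lemma mk_natiso : inhabited (NatIsoId F G).
Proof.
  constructor. refine {| eta := betaH; etainv := alpha |}.
  - intros M x; simpl. apply inj, betaK.
  - intros M y; simpl. apply betaK.
  - intros M N f y; simpl. apply inj. rewrite betaK, <- nat, betaK. reflexivity.
Qed.
End NatIso.

Section Main.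
Variables (R : NURing) (S : R -> Prop) (HS : is_subring R S) (E : R -> Prop)
  (HE : local_units R E)
  (Hjoin : forall e1 e2, E e1 -> E e2 -> E (radd (radd e1 e2) (ropp (rmul e1 e2))))
  (H1 : local_units (subNURing HS) (fun x => E (proj1_sig x)))
  (H2 : forall e, E e -> S e -> forall x,
      (exists y, S y /\ x = rmul (rmul e y) e) <-> (exists y, x = rmul (rmul e y) e))
  (H3 : forall e, E e -> exists (I : Type) (ei : I -> R),
      (forall i, E (ei i) /\ S (ei i)) /\ surj_hom_from_dsum ei e).

Notation SS := (subNURing HS).
Definition ES (e : R) := E e /\ S e.

Lemma Eid e : E e -> rmul e e = e.
Proof. destruct HE as [H _]; auto. Qed.
Lemma Ecomm e f : E e -> E f -> rmul e f = rmul f e.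
Proof. destruct HE as [_ [H _]]; auto. Qed.

Lemma ES_join a b : ES a -> ES b -> ES (join a b).
Proof.
  intros [Ea Sa] [Eb Sb]. split; [apply Hjoin; auto|].
  unfold join. apply (subD HS); [apply (subD HS); auto|]. apply (subN HS), (subM HS); auto.
Qed.

Lemma join_absl a b : E a -> E b -> rmul (join a b) a = a.
Proof. intros Ea Eb. rewrite (@Ecomm (join a b) a (Hjoin Ea Eb) Ea). apply join_l, Eid; auto. Qed.
Lemma join_absr a b : E a -> E b -> rmul (join a b) b = b.
Proof. intros Ea Eb. rewrite (@Ecomm (join a b) b (Hjoin Ea Eb) Eb). apply join_r; [apply Eid; auto| apply Ecomm; auto]. Qed.
Lemma join_absl' a b : E a -> E b -> rmul a (join a b) = a.
Proof. intros Ea Eb. apply join_l, Eid; auto. Qed.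
Lemma join_absr' a b : E a -> E b -> rmul b (join a b) = b.
Proof. intros Ea Eb. apply join_r; [apply Eid; auto| apply Ecomm; auto]. Qed.

Lemma corner_S e1 e2 z : ES e1 -> ES e2 -> rmul e1 z = z -> rmul z e2 = z -> S z.
Proof.
  intros H1' H2' Hl Hr.
  pose proof (ES_join H1' H2') as [Eh Sh].
  destruct H1' as [E1 S1], H2' as [E2 S2].
  assert (Hz : z = rmul (rmul (join e1 e2) z) (join e1 e2)).
  { rewrite <- Hl at 2. rewrite rmulA, join_absl by auto. rewrite Hl.
    rewrite <- Hr at 2. rewrite <- rmulA, join_absr' by auto. rewrite Hr. reflexivity. }
  destruct (proj2 (H2 Eh Sh z) (ex_intro _ z Hz)) as [y [Sy ->]].
  apply (subM HS); [apply (subM HS)|]; auto.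
Qed.

Lemma S_unit (s : SS) : exists e, ES e /\ rmul e (proj1_sig s) = proj1_sig s /\
   rmul (proj1_sig s) e = proj1_sig s.
Proof.
  destruct H1 as [Hid [_ Hex]].
  destruct (Hex s) as [[e Se] [Ee [y Hy]]]. simpl in Ee.
  pose proof (f_equal (@proj1_sig _ _) Hy) as Hy'. simpl in Hy'.
  exists e. split; [split; auto|]. rewrite Hy'.
  split; [rewrite !rmulA, Eid by auto; reflexivity|].
  rewrite <- rmulA, Eid by auto; reflexivity.
Qed.

Lemma R_unit (x : R) : exists e, E e /\ rmul e x = x /\ rmul x e = x.
Proof.
  destruct HE as [Hid [_ Hex]].
  destruct (Hex x) as [e [Ee [y ->]]].
  exists e. split; auto. split; [rewrite !rmulA, Eid by auto; reflexivity|].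
  rewrite <- rmulA, Eid by auto; reflexivity.
Qed.

Lemma SS_join_closed (a b : SS) : E (proj1_sig a) -> E (proj1_sig b) -> E (proj1_sig (join a b)).
Proof. intros Ha Hb. exact (Hjoin Ha Hb). Qed.

Lemma SS_unit_fix (N : Module SS) (n : N) :
  exists e : SS, E (proj1_sig e) /\ mact e n = n.
Proof. apply (@unit_fix SS N _ H1). intros a b; apply SS_join_closed. Qed.

Lemma R_unit_fix (M : Module R) (m : M) : exists e, E e /\ mact e m = m.
Proof. apply (@unit_fix R M _ HE). exact Hjoin. Qed.

Inductive gen : R -> Prop :=
| gen0 : gen rzero
| genE a e b : ES e -> gen (rmul (rmul a e) b)
| genD x y : gen x -> gen y -> gen (radd x y).

Lemma full f : E f -> gen f.
Proof.
  intro Ef. destruct (H3 Ef) as [I [ei [Hei [phi [Hp1 [Hadd [Hact Hsurj]]]]]]].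
  destruct (Hsurj f (ex_intro _ f (eq_sym (Eid Ef)))) as [g [[Hg [l Hl]] <-]].
  clear Hsurj Hp1.
  assert (Dz : dsum_elem ei (fun _ => rzero)).
  { split; [intro i; exists rzero; symmetry; apply mul0r| exists nil; auto]. }
  assert (Hz : phi (fun _ => rzero) = rzero).
  { apply radd_idem. rewrite <- Hadd by auto. f_equal. apply functional_extensionality; intro; apply radd0. }
  clear Ef. revert g Hg Hl. induction l as [|i l IH]; intros g Hg Hl.
  - replace g with (fun _ : I => @rzero R).
    + rewrite Hz; constructor.
    + apply functional_extensionality; intro i; symmetry; apply Hl; simpl; auto.
  - set (g1 := fun j => if excluded_middle_informative (j = i) then rzero else g j).
    set (g2 := fun j => if excluded_middle_informative (j = i) then g j else rzero).
    assert (D1 : dsum_elem ei g1).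
    { split.
      - intro j; unfold g1; destruct (excluded_middle_informative (j = i)); auto.
        exists rzero; symmetry; apply mul0r.
      - exists l; intros j Hj; unfold g1; destruct (excluded_middle_informative (j = i)); auto.
        apply Hl; simpl; intros [->|H]; auto. }
    assert (D2 : dsum_elem ei g2).
    { split.
      - intro j; unfold g2; destruct (excluded_middle_informative (j = i)); auto.
        exists rzero; symmetry; apply mul0r.
      - exists (i :: nil); intros j Hj; unfold g2; destruct (excluded_middle_informative (j = i)); auto.
        exfalso; apply Hj; simpl; auto. }
    replace g with (fun j => radd (g1 j) (g2 j)).
    2:{ apply functional_extensionality; intro j; unfold g1, g2.
        destruct (excluded_middle_informative (j = i)); [apply radd0l| apply radd0]. }
    rewrite Hadd by auto. constructor.
    + apply IH; [apply D1|]. intros j Hj; unfold g1; destruct (excluded_middle_informative (j = i)); auto.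
      apply Hl; simpl; intros [->|H]; auto.
    + destruct (Hg i) as [x Hx].
      set (u := fun j => if excluded_middle_informative (j = i) then ei j else rzero).
      assert (Du : dsum_elem ei u).
      { split.
        - intro j; unfold u; destruct (excluded_middle_informative (j = i)).
          + exists (ei j); symmetry; apply Eid, (Hei j).
          + exists rzero; symmetry; apply mul0r.
        - exists (i :: nil); intros j Hj; unfold u; destruct (excluded_middle_informative (j = i)); auto.
          exfalso; apply Hj; simpl; auto. }
      replace g2 with (fun j => rmul x (u j)).
      2:{ apply functional_extensionality; intro j; unfold g2, u.
          destruct (excluded_middle_informative (j = i)); [subst; auto| apply mulr0]. }
      assert (Hu : phi u = rmul (ei i) (phi u)).
      { rewrite <- Hact by auto. f_equal. apply functional_extensionality; intro j; unfold u.
        destruct (excluded_middle_informative (j = i)); [subst; symmetry; apply Eid, (Hei i)| symmetry; apply mulr0]. }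
      rewrite Hact, Hu, rmulA by auto. constructor. apply Hei.
Qed.

Definition Q := {q : R | exists e, ES e /\ rmul e q = q}.

Lemma Q_eq (q1 q2 : Q) : proj1_sig q1 = proj1_sig q2 -> q1 = q2.
Proof. apply sig_eq_val. Qed.

Lemma qadd_pf (q1 q2 : Q) : exists e, ES e /\ rmul e (radd (proj1_sig q1) (proj1_sig q2)) = radd (proj1_sig q1) (proj1_sig q2).
Proof.
  destruct q1 as [q1 [e1 [He1 H1q]]], q2 as [q2 [e2 [He2 H2q]]]; simpl.
  exists (join e1 e2). split; [apply ES_join; auto|].
  destruct He1 as [E1 _], He2 as [E2 _].
  rewrite rmulDr. rewrite <- H1q at 1. rewrite <- H2q at 1.
  rewrite !rmulA, join_absl, join_absr by auto. rewrite H1q, H2q; reflexivity.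
Qed.
Definition qadd (q1 q2 : Q) : Q := exist _ _ (qadd_pf q1 q2).

Lemma qr_pf (q : Q) (r : R) : exists e, ES e /\ rmul e (rmul (proj1_sig q) r) = rmul (proj1_sig q) r.
Proof.
  destruct q as [q [e [He Hq]]]; simpl. exists e; split; auto. rewrite rmulA, Hq; reflexivity.
Qed.
Definition qr (q : Q) (r : R) : Q := exist _ _ (qr_pf q r).

Lemma qs_pf (s : SS) (q : Q) : exists e, ES e /\ rmul e (rmul (proj1_sig s) (proj1_sig q)) = rmul (proj1_sig s) (proj1_sig q).
Proof.
  destruct (S_unit s) as [e [He [Hs _]]]. exists e; split; auto. rewrite rmulA, Hs; reflexivity.
Qed.
Definition qs (s : SS) (q : Q) : Q := exist _ _ (qs_pf s q).

Definition qe (e : R) (He : ES e) : Q := exist _ e (ex_intro _ e (conj He (Eid (proj1 He)))).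

Lemma qr_qr q a b : qr (qr q a) b = qr q (rmul a b).
Proof. apply Q_eq; simpl; symmetry; apply rmulA. Qed.

Lemma qS (q : Q) (x e : R) : ES e -> S (rmul (rmul (proj1_sig q) x) e).
Proof.
  intro He. destruct q as [q [g [Hg Hq]]]; simpl.
  apply (corner_S Hg He).
  - rewrite !rmulA, Hq; reflexivity.
  - rewrite <- rmulA, Eid by apply He; reflexivity.
Qed.

Definition HomQ (N : Module SS) (phi : Q -> N) : Prop :=
  (forall q1 q2, phi (qadd q1 q2) = madd (phi q1) (phi q2)) /\
  (forall s q, phi (qs s q) = mact s (phi q)) /\
  (exists f, E f /\ forall q, phi (qr q f) = phi q).

Section PsiDef.
Variable N : Module SS.
Definition PsiC := {phi : Q -> N | HomQ N phi}.

Lemma psi_ext (a b : PsiC) : (forall q, proj1_sig a q = proj1_sig b q) -> a = b.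
Proof. intro H. apply sig_eq_val. apply functional_extensionality; exact H. Qed.

Lemma psi_zero_pf : HomQ N (fun _ => mzero).
Proof.
  split; [intros; symmetry; apply madd0|]. split; [intros; symmetry; apply mact_r0|].
  destruct (R_unit rzero) as [f [Ef _]]. exists f; split; auto.
Qed.
Definition psi_zero : PsiC := exist _ _ psi_zero_pf.

Lemma psi_add_pf (a b : PsiC) : HomQ N (fun q => madd (proj1_sig a q) (proj1_sig b q)).
Proof.
  destruct a as [a [Aa [La [fa [Efa Ua]]]]], b as [b [Ab [Lb [fb [Efb Ub]]]]]; simpl.
  split; [intros; rewrite Aa, Ab; apply madd_swap|].
  split; [intros; rewrite La, Lb, mactDr; reflexivity|].
  exists (join fa fb). split; [apply Hjoin; auto|].
  intro q. rewrite <- (Ua (qr q _)), <- (Ub (qr q _)), !qr_qr, join_absl, join_absr by auto.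
  rewrite Ua, Ub; reflexivity.
Qed.
Definition psi_add (a b : PsiC) : PsiC := exist _ _ (psi_add_pf a b).

Lemma psi_opp_pf (a : PsiC) : HomQ N (fun q => mopp (proj1_sig a q)).
Proof.
  destruct a as [a [Aa [La [fa [Efa Ua]]]]]; simpl.
  split; [intros; rewrite Aa; apply mopp_add|].
  split; [intros; rewrite La, mact_opp; reflexivity|].
  exists fa; split; auto. intro q; rewrite Ua; reflexivity.
Qed.
Definition psi_opp (a : PsiC) : PsiC := exist _ _ (psi_opp_pf a).

Lemma psi_act_pf (r : R) (a : PsiC) : HomQ N (fun q => proj1_sig a (qr q r)).
Proof.
  destruct a as [ph [Aa [La HU]]]; simpl.
  split.
  { intros q1 q2. rewrite <- Aa. f_equal. apply Q_eq; simpl; apply rmulDl. }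
  split.
  { intros s q. rewrite <- La. f_equal. apply Q_eq; simpl; symmetry; apply rmulA. }
  destruct (R_unit r) as [f [Ef [Hf _]]]. exists f; split; auto.
  intro q. rewrite qr_qr, Hf; reflexivity.
Qed.
Definition psi_act (r : R) (a : PsiC) : PsiC := exist _ _ (psi_act_pf r a).

Lemma psi_maddA x y z : psi_add x (psi_add y z) = psi_add (psi_add x y) z.
Proof. apply psi_ext; intro; simpl; apply maddA. Qed.
Lemma psi_maddC x y : psi_add x y = psi_add y x.
Proof. apply psi_ext; intro; simpl; apply maddC. Qed.
Lemma psi_madd0 x : psi_add x psi_zero = x.
Proof. apply psi_ext; intro; simpl; apply madd0. Qed.
Lemma psi_maddN x : psi_add x (psi_opp x) = psi_zero.
Proof. apply psi_ext; intro; simpl; apply maddN. Qed.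
Lemma psi_mactDl r s x : psi_act (radd r s) x = psi_add (psi_act r x) (psi_act s x).
Proof.
  apply psi_ext; intro q; simpl. destruct (proj2_sig x) as [Aa _].
  rewrite <- Aa. f_equal. apply Q_eq; simpl; apply rmulDr.
Qed.
Lemma psi_mactDr r x y : psi_act r (psi_add x y) = psi_add (psi_act r x) (psi_act r y).
Proof. apply psi_ext; intro; reflexivity. Qed.
Lemma psi_mactM r s x : psi_act (rmul r s) x = psi_act r (psi_act s x).
Proof. apply psi_ext; intro q; simpl. f_equal. symmetry; apply qr_qr. Qed.
Lemma psi_munital x : exists l : list (R * PsiC),
  x = fold_right (fun p acc => psi_add (psi_act (fst p) (snd p)) acc) psi_zero l.
Proof.
  destruct (proj2_sig x) as [_ [_ [f [Ef Ua]]]].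
  exists ((f, x) :: nil). simpl. apply psi_ext; intro q; simpl.
  rewrite madd0, Ua; reflexivity.
Qed.

Definition PsiM : Module R :=
  {| mcar := PsiC; mzero := psi_zero; madd := psi_add; mopp := psi_opp; mact := psi_act;
     maddA := psi_maddA; maddC := psi_maddC; madd0 := psi_madd0; maddN := psi_maddN;
     mactDl := psi_mactDl; mactDr := psi_mactDr; mactM := psi_mactM; munital := psi_munital |}.
End PsiDef.

Lemma psi_map_pf (N1 N2 : Module SS) (h : Hom N1 N2) (a : PsiC N1) :
  HomQ N2 (fun q => h (proj1_sig a q)).
Proof.
  destruct a as [a [Aa [La [f [Ef Ua]]]]]; simpl.
  split; [intros; rewrite Aa; apply hadd|].
  split; [intros; rewrite La; apply hact|].
  exists f; split; auto. intro q; rewrite Ua; reflexivity.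
Qed.
Definition psi_map (N1 N2 : Module SS) (h : Hom N1 N2) (a : PsiC N1) : PsiC N2 :=
  exist _ _ (psi_map_pf h a).

Definition PsiHom (N1 N2 : Module SS) (h : Hom N1 N2) : Hom (PsiM N1) (PsiM N2).
Proof.
  refine (@Build_Hom R (PsiM N1) (PsiM N2) (psi_map h) _ _).
  - intros x y; apply psi_ext; intro q; simpl; apply hadd.
  - intros r x; apply psi_ext; intro q; reflexivity.
Defined.

Definition PsiF : Functor SS R.
Proof.
  refine {| Fobj := PsiM; Fhom := PsiHom |}.
  - intros M N f g H y; apply psi_ext; intro q; simpl; apply H.
  - intros M y; apply psi_ext; intro q; reflexivity.
  - intros M N P f g y; apply psi_ext; intro q; reflexivity.
Defined.


Section PhiDef.
Variable M : Module R.
Definition PhiC := {m : M | exists e, ES e /\ mact e m = m}.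

Lemma phi_zero_pf : exists e, ES e /\ mact e (@mzero _ M) = mzero.
Proof. destruct (S_unit (s_zero HS)) as [e [He _]]. exists e; split; auto; apply mact_r0. Qed.
Definition phi_zero : PhiC := exist _ _ phi_zero_pf.

Lemma phi_add_pf (a b : PhiC) : exists e, ES e /\
  mact e (madd (proj1_sig a) (proj1_sig b)) = madd (proj1_sig a) (proj1_sig b).
Proof.
  destruct a as [a [ea [Ha Ea]]], b as [b [eb [Hb Eb]]]; simpl.
  exists (join ea eb); split; [apply ES_join; auto|].
  rewrite mactDr. rewrite <- Ea at 1. rewrite <- Eb at 1. rewrite <- !mactM.
  rewrite join_absl, join_absr by (apply Ha || apply Hb). rewrite Ea, Eb; reflexivity.
Qed.
Definition phi_add (a b : PhiC) : PhiC := exist _ _ (phi_add_pf a b).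

Lemma phi_opp_pf (a : PhiC) : exists e, ES e /\ mact e (mopp (proj1_sig a)) = mopp (proj1_sig a).
Proof.
  destruct a as [a [ea [Ha Ea]]]; simpl. exists ea; split; auto. rewrite mact_opp, Ea; reflexivity.
Qed.
Definition phi_opp (a : PhiC) : PhiC := exist _ _ (phi_opp_pf a).

Lemma phi_act_pf (s : SS) (a : PhiC) : exists e, ES e /\
  mact e (mact (proj1_sig s) (proj1_sig a)) = mact (proj1_sig s) (proj1_sig a).
Proof.
  destruct (S_unit s) as [e [He [Hs _]]]. exists e; split; auto. rewrite <- mactM, Hs; reflexivity.
Qed.
Definition phi_act (s : SS) (a : PhiC) : PhiC := exist _ _ (phi_act_pf s a).

Lemma phi_maddA x y z : phi_add x (phi_add y z) = phi_add (phi_add x y) z.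
Proof. apply sig_eq_val; simpl; apply maddA. Qed.
Lemma phi_maddC x y : phi_add x y = phi_add y x.
Proof. apply sig_eq_val; simpl; apply maddC. Qed.
Lemma phi_madd0 x : phi_add x phi_zero = x.
Proof. apply sig_eq_val; simpl; apply madd0. Qed.
Lemma phi_maddN x : phi_add x (phi_opp x) = phi_zero.
Proof. apply sig_eq_val; simpl; apply maddN. Qed.
Lemma phi_mactDl (r s : SS) x : phi_act (radd r s) x = phi_add (phi_act r x) (phi_act s x).
Proof. apply sig_eq_val; simpl; apply mactDl. Qed.
Lemma phi_mactDr (r : SS) x y : phi_act r (phi_add x y) = phi_add (phi_act r x) (phi_act r y).
Proof. apply sig_eq_val; simpl; apply mactDr. Qed.
Lemma phi_mactM (r s : SS) x : phi_act (rmul r s) x = phi_act r (phi_act s x).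
Proof. apply sig_eq_val; simpl; apply mactM. Qed.
Lemma phi_munital x : exists l : list (SS * PhiC),
  x = fold_right (fun p acc => phi_add (phi_act (fst p) (snd p)) acc) phi_zero l.
Proof.
  destruct (proj2_sig x) as [e [[Ee Se] He]].
  exists ((exist _ e Se : SS, x) :: nil). apply sig_eq_val; simpl.
  rewrite madd0, He; reflexivity.
Qed.

Definition PhiM : Module SS :=
  {| mcar := PhiC; mzero := phi_zero; madd := phi_add; mopp := phi_opp; mact := phi_act;
     maddA := phi_maddA; maddC := phi_maddC; madd0 := phi_madd0; maddN := phi_maddN;
     mactDl := phi_mactDl; mactDr := phi_mactDr; mactM := phi_mactM; munital := phi_munital |}.
End PhiDef.

Lemma phi_map_pf (M1 M2 : Module R) (h : Hom M1 M2) (a : PhiC M1) :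
  exists e, ES e /\ mact e (h (proj1_sig a)) = h (proj1_sig a).
Proof.
  destruct a as [a [e [He Ha]]]; simpl. exists e; split; auto. rewrite <- hact, Ha; reflexivity.
Qed.
Definition phi_map (M1 M2 : Module R) (h : Hom M1 M2) (a : PhiC M1) : PhiC M2 :=
  exist _ _ (phi_map_pf h a).

Definition PhiHom (M1 M2 : Module R) (h : Hom M1 M2) : Hom (PhiM M1) (PhiM M2).
Proof.
  refine (@Build_Hom SS (PhiM M1) (PhiM M2) (phi_map h) _ _).
  - intros x y; apply sig_eq_val; simpl; apply hadd.
  - intros r x; apply sig_eq_val; simpl; apply hact.
Defined.

Definition PhiF : Functor R SS.
Proof.
  refine {| Fobj := PhiM; Fhom := PhiHom |}.
  - intros M N f g H y; apply sig_eq_val; simpl; apply H.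
  - intros M y; apply sig_eq_val; reflexivity.
  - intros M N P f g y; apply sig_eq_val; reflexivity.
Defined.


Section SideA.
Variable M : Module R.

Lemma qm_pf (q : Q) (m : M) : exists e, ES e /\ mact e (mact (proj1_sig q) m) = mact (proj1_sig q) m.
Proof.
  destruct q as [q [e [He Hq]]]; simpl. exists e; split; auto. rewrite <- mactM, Hq; reflexivity.
Qed.
Definition qm (q : Q) (m : M) : PhiC M := exist _ _ (qm_pf q m).

Lemma alphaA_pf (m : M) : HomQ (PhiM M) (fun q => qm q m).
Proof.
  split; [intros; apply sig_eq_val; simpl; apply mactDl|].
  split; [intros; apply sig_eq_val; simpl; apply mactM|].
  destruct (R_unit_fix _ m) as [f [Ef Hf]]. exists f; split; auto.
  intro q; apply sig_eq_val; simpl. rewrite mactM, Hf; reflexivity.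
Qed.
Definition alphaA_fun (m : M) : PsiC (PhiM M) := exist _ _ (alphaA_pf m).

Definition alphaA : Hom M (PsiF (PhiF M)).
Proof.
  refine (@Build_Hom R M (PsiF (PhiF M)) alphaA_fun _ _).
  - intros x y; apply psi_ext; intro q; apply sig_eq_val; simpl; apply mactDr.
  - intros r x; apply psi_ext; intro q; apply sig_eq_val; simpl; symmetry; apply mactM.
Defined.

Lemma alphaA_inj (m1 m2 : M) : alphaA m1 = alphaA m2 -> m1 = m2.
Proof.
  intro H.
  assert (Hq : forall q : Q, mact (proj1_sig q) m1 = mact (proj1_sig q) m2).
  { intro q. pose proof (f_equal (fun a : PsiC (PhiM M) => proj1_sig (proj1_sig a q)) H) as H'.
    exact H'. }
  assert (Hg : forall x, gen x -> mact x m1 = mact x m2).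
  { intros x Gx; induction Gx as [|a e b He|x y _ IHx _ IHy].
    - rewrite !mact_0m; reflexivity.
    - rewrite <- rmulA, !mactM. f_equal. rewrite <- !mactM. exact (Hq (qr (qe He) b)).
    - rewrite !mactDl, IHx, IHy; reflexivity. }
  destruct (R_unit_fix _ m1) as [f1 [Ef1 H1m]], (R_unit_fix _ m2) as [f2 [Ef2 H2m]].
  assert (Hj1 : mact (join f1 f2) m1 = m1).
  { rewrite <- H1m at 1. rewrite <- mactM, join_absl by auto; exact H1m. }
  assert (Hj2 : mact (join f1 f2) m2 = m2).
  { rewrite <- H2m at 1. rewrite <- mactM, join_absr by auto; exact H2m. }
  rewrite <- Hj1, <- Hj2. apply Hg, full, Hjoin; auto.
Qed.

Lemma alphaA_surj (y : PsiC (PhiM M)) : exists m, alphaA m = y.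
Proof.
  destruct y as [y [Ay [Ly [f [Ef Uy]]]]].
  assert (Hz : forall q, proj1_sig (y (qr q rzero)) = mzero).
  { intro q. assert (Hy0 : y (qr q rzero) = phi_zero M).
    { apply (@madd_idem SS (PhiM M)). rewrite <- Ay. f_equal. apply Q_eq; simpl.
      rewrite mulr0; apply radd0. }
    rewrite Hy0; reflexivity. }
  assert (Hg : forall x, gen x -> exists m, forall q : Q,
             mact (proj1_sig q) m = proj1_sig (y (qr q x))).
  { intros x Gx; induction Gx as [|a e b He|x1 x2 _ [m1 IH1] _ [m2 IH2]].
    - exists mzero; intro q. rewrite Hz; apply mact_r0.
    - set (w := qr (qe He) b).
      set (es := exist _ e (proj2 He) : SS).
      assert (Hw : y w = phi_act es (y w)).
      { transitivity (y (qs es w)); [|apply Ly].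
        f_equal. apply Q_eq; simpl. rewrite rmulA, Eid by apply He; reflexivity. }
      exists (mact a (proj1_sig (y w))). intro q.
      set (sq := exist _ _ (qS q a He) : SS).
      transitivity (proj1_sig (phi_act sq (y w))).
      + simpl. rewrite <- mactM. rewrite Hw at 1. simpl. rewrite <- mactM. reflexivity.
      + transitivity (proj1_sig (y (qs sq w))); [f_equal; symmetry; apply Ly|].
        f_equal. f_equal. apply Q_eq; simpl.
        rewrite <- !rmulA. f_equal. rewrite (rmulA _ e e), Eid by apply He. reflexivity.
    - exists (madd m1 m2). intro q. rewrite mactDr, IH1, IH2.
      change (madd (proj1_sig (y (qr q x1))) (proj1_sig (y (qr q x2))))
        with (proj1_sig (phi_add (y (qr q x1)) (y (qr q x2)))).
      transitivity (proj1_sig (y (qadd (qr q x1) (qr q x2)))); [f_equal; symmetry; apply Ay|].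
      f_equal. f_equal. apply Q_eq; simpl. symmetry; apply rmulDr. }
  destruct (Hg f (full Ef)) as [m Hm]. exists m.
  apply psi_ext; intro q; apply sig_eq_val; simpl. rewrite Hm, Uy. reflexivity.
Qed.

End SideA.

Lemma alphaA_nat (M N : Module R) (h : Hom M N) (x : M) :
  Fhom PsiF (Fhom PhiF h) (alphaA M x) = alphaA N (h x).
Proof. apply psi_ext; intro q; apply sig_eq_val; simpl; apply hact. Qed.

Lemma isoA : inhabited (NatIsoId PhiF PsiF).
Proof.
  apply (mk_natiso PhiF PsiF alphaA).
  - exact alphaA_inj.
  - exact alphaA_surj.
  - exact alphaA_nat.
Qed.


Local Unset Strict Implicit.
Lemma qS' (q : Q) (e : R) : ES e -> S (rmul (proj1_sig q) e).
Proof.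
  intro He. destruct q as [q [g [Hg Hq]]]; simpl.
  apply (corner_S Hg He); [rewrite rmulA, Hq; reflexivity|].
  rewrite <- rmulA, Eid by apply He; reflexivity.
Qed.

Definition ESS (e : SS) (He : E (proj1_sig e)) : ES (proj1_sig e) := conj He (proj2_sig e).
Definition sqe (q : Q) (e : SS) (He : E (proj1_sig e)) : SS :=
  exist _ (rmul (proj1_sig q) (proj1_sig e)) (qS' q (ESS He)).

Lemma SS_absl (a b : SS) : E (proj1_sig a) -> E (proj1_sig b) -> rmul (join a b) a = a.
Proof. intros Ea Eb. apply sig_eq_val. exact (join_absl Ea Eb). Qed.
Lemma SS_absr (a b : SS) : E (proj1_sig a) -> E (proj1_sig b) -> rmul (join a b) b = b.
Proof. intros Ea Eb. apply sig_eq_val. exact (join_absr Ea Eb). Qed.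

Section SideB.
Variable N : Module SS.

Definition phin (e : SS) (He : E (proj1_sig e)) (n : N) (q : Q) : N := mact (sqe q He) n.

Lemma phin_indep (e1 e2 : SS) (He1 : E (proj1_sig e1)) (He2 : E (proj1_sig e2)) (n : N) q :
  mact e1 n = n -> mact e2 n = n -> phin He1 n q = phin He2 n q.
Proof.
  intros Hn1 Hn2. unfold phin.
  rewrite <- Hn2 at 1. rewrite <- Hn1 at 2. rewrite <- !mactM. f_equal.
  apply sig_eq_val; simpl. rewrite <- !rmulA. f_equal. apply Ecomm; auto.
Qed.

Lemma phin_unit (e : SS) (He : E (proj1_sig e)) (n : N) q :
  phin He n (qr q (proj1_sig e)) = phin He n q.
Proof.
  unfold phin. f_equal. apply sig_eq_val; simpl. rewrite <- rmulA, Eid by auto; reflexivity.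
Qed.

Lemma phin_hom (e : SS) (He : E (proj1_sig e)) (n : N) : HomQ N (phin He n).
Proof.
  split; [intros; unfold phin; rewrite <- mactDl; f_equal; apply sig_eq_val; simpl; apply rmulDl|].
  split; [intros; unfold phin; rewrite <- mactM; f_equal; apply sig_eq_val; simpl; symmetry; apply rmulA|].
  exists (proj1_sig e); split; auto. intro q; apply phin_unit.
Qed.
Definition psiB (e : SS) (He : E (proj1_sig e)) (n : N) : PsiC N := exist _ _ (phin_hom He n).

Lemma elemB_pf (e : SS) (He : E (proj1_sig e)) (n : N) :
  exists e', ES e' /\ psi_act e' (psiB He n) = psiB He n.
Proof.
  exists (proj1_sig e); split; [apply ESS; auto|].
  apply psi_ext; intro q; simpl. apply phin_unit.
Qed.
Definition elemB (e : SS) (He : E (proj1_sig e)) (n : N) : PhiC (PsiM N) :=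
  exist _ (psiB He n) (elemB_pf He n).

Definition pick_unit (n : N) := constructive_indefinite_description _ (SS_unit_fix N n).

Definition alphaB_fun (n : N) : PhiC (PsiM N) :=
  elemB (proj1 (proj2_sig (pick_unit n))) n.

Lemma alphaB_any (n : N) (e : SS) (He : E (proj1_sig e)) :
  mact e n = n -> alphaB_fun n = elemB He n.
Proof.
  intro Hn. apply sig_eq_val; apply psi_ext; intro q; simpl.
  apply phin_indep; auto. exact (proj2 (proj2_sig (pick_unit n))).
Qed.

Lemma join_fix1 (a b : SS) (n : N) : E (proj1_sig a) -> E (proj1_sig b) ->
  mact a n = n -> mact (join a b) n = n.
Proof. intros Ea Eb Hn. rewrite <- Hn at 1. rewrite <- mactM, SS_absl by auto. exact Hn. Qed.
Lemma join_fix2 (a b : SS) (n : N) : E (proj1_sig a) -> E (proj1_sig b) ->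
  mact b n = n -> mact (join a b) n = n.
Proof. intros Ea Eb Hn. rewrite <- Hn at 1. rewrite <- mactM, SS_absr by auto. exact Hn. Qed.

Definition alphaB : Hom N (PhiF (PsiF N)).
Proof.
  refine (@Build_Hom SS N (PhiF (PsiF N)) alphaB_fun _ _).
  - intros x y.
    destruct (SS_unit_fix N x) as [e1 [E1 Hx]], (SS_unit_fix N y) as [e2 [E2 Hy]].
    pose proof (SS_join_closed _ _ E1 E2) as Ej.
    rewrite (@alphaB_any x _ Ej (join_fix1 E1 E2 Hx)), (@alphaB_any y _ Ej (join_fix2 E1 E2 Hy)).
    rewrite (@alphaB_any (madd x y) _ Ej).
    2:{ rewrite mactDr, (join_fix1 E1 E2 Hx), (join_fix2 E1 E2 Hy); reflexivity. }
    apply sig_eq_val; apply psi_ext; intro q; simpl. unfold phin. apply mactDr.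
  - intros s n.
    destruct (SS_unit_fix N n) as [e [Ee Hn]].
    destruct (S_unit s) as [g [[Eg Sg] [Hgs Hsg]]].
    set (gS := exist _ g Sg : SS).
    assert (Ej : E (proj1_sig (join e gS))) by exact (SS_join_closed e gS Ee Eg).
    assert (Hjs : rmul (join e gS) s = s).
    { apply sig_eq_val. change (rmul (join (proj1_sig e) g) (proj1_sig s) = proj1_sig s).
      rewrite <- Hgs at 1. rewrite rmulA. rewrite (join_absr (a:=proj1_sig e) (b:=g) Ee Eg). exact Hgs. }
    assert (Hsj : rmul (proj1_sig s) (proj1_sig (join e gS)) = proj1_sig s).
    { change (rmul (proj1_sig s) (join (proj1_sig e) g) = proj1_sig s).
      rewrite <- Hsg at 1. rewrite <- rmulA. rewrite (join_absr' (a:=proj1_sig e) (b:=g) Ee Eg). exact Hsg. }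
    assert (Hjn : mact (join e gS) n = n) by exact (join_fix1 (b:=gS) Ee Eg Hn).
    rewrite (@alphaB_any n _ Ej Hjn).
    rewrite (@alphaB_any (mact s n) _ Ej).
    2:{ rewrite <- mactM, Hjs; reflexivity. }
    apply sig_eq_val; apply psi_ext; intro q; simpl. unfold phin. rewrite <- mactM. f_equal.
    apply sig_eq_val; simpl.
    pose proof (f_equal (@proj1_sig _ _) Hjs) as Hjs'. simpl in Hjs'.
    change (rmul (rmul (proj1_sig q) (join (proj1_sig e) g)) (proj1_sig s) =
            rmul (rmul (proj1_sig q) (proj1_sig s)) (join (proj1_sig e) g)).
    change (rmul (join (proj1_sig e) g) (proj1_sig s) = proj1_sig s) in Hjs'.
    change (rmul (proj1_sig s) (join (proj1_sig e) g) = proj1_sig s) in Hsj.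
    rewrite <- !rmulA, Hjs', Hsj; reflexivity.
Defined.

Lemma alphaB_inj (n1 n2 : N) : alphaB n1 = alphaB n2 -> n1 = n2.
Proof.
  intro H.
  destruct (SS_unit_fix N n1) as [e1 [E1 Hx]], (SS_unit_fix N n2) as [e2 [E2 Hy]].
  pose proof (SS_join_closed _ _ E1 E2) as Ej.
  pose proof (join_fix1 E1 E2 Hx) as J1. pose proof (join_fix2 E1 E2 Hy) as J2.
  change (alphaB_fun n1 = alphaB_fun n2) in H.
  rewrite (@alphaB_any n1 _ Ej J1), (@alphaB_any n2 _ Ej J2) in H.
  pose proof (f_equal (fun a : PhiC (PsiM N) => proj1_sig (proj1_sig a) (qe (ESS Ej))) H) as H'.
  change (phin Ej n1 (qe (ESS Ej)) = phin Ej n2 (qe (ESS Ej))) in H'. unfold phin in H'.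
  assert (Hq : sqe (qe (ESS Ej)) Ej = join e1 e2).
  { apply sig_eq_val; simpl. apply Eid; exact Ej. }
  rewrite Hq, J1, J2 in H'. exact H'.
Qed.

Lemma alphaB_surj (y : PhiC (PsiM N)) : exists n, alphaB n = y.
Proof.
  destruct y as [psi [e [He Hpsi]]].
  pose (eS := exist _ e (proj2 He) : SS).
  destruct (proj2_sig psi) as [A [L U]].
  set (ph := proj1_sig psi) in *.
  exists (ph (qe He)).
  assert (Hn : mact eS (ph (qe He)) = ph (qe He)).
  { rewrite <- L. f_equal. apply Q_eq; simpl. apply Eid, He. }
  change (alphaB_fun (ph (qe He)) = exist _ psi (ex_intro _ e (conj He Hpsi))).
  rewrite (@alphaB_any _ eS (proj1 He) Hn).
  apply sig_eq_val. apply psi_ext; intro q.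
  change (phin (e:=eS) (proj1 He) (ph (qe He)) q = ph q). unfold phin.
  rewrite <- L.
  pose proof (f_equal (fun a : PsiC N => proj1_sig a q) Hpsi) as Hq.
  change (ph (qr q e) = ph q) in Hq.
  rewrite <- Hq. f_equal. apply Q_eq; simpl. rewrite <- rmulA, Eid by apply He. reflexivity.
Qed.
End SideB.

Lemma alphaB_nat (N1 N2 : Module SS) (h : Hom N1 N2) (x : N1) :
  Fhom PhiF (Fhom PsiF h) (alphaB N1 x) = alphaB N2 (h x).
Proof.
  destruct (SS_unit_fix N1 x) as [e [Ee Hn]].
  assert (Hhn : mact e (h x) = h x) by (rewrite <- hact, Hn; reflexivity).
  change (phi_map (PsiHom h) (alphaB_fun x) = alphaB_fun (h x)).
  rewrite (@alphaB_any _ x _ Ee Hn), (@alphaB_any _ (h x) _ Ee Hhn).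
  apply sig_eq_val; apply psi_ext; intro q; simpl. unfold phin. apply hact.
Qed.

Lemma isoB : inhabited (NatIsoId PsiF PhiF).
Proof.
  apply (mk_natiso PsiF PhiF alphaB).
  - exact alphaB_inj.
  - exact alphaB_surj.
  - exact alphaB_nat.
Qed.

Lemma morita : Morita_equivalent SS R.
Proof. exists PsiF, PhiF. split; [exact isoB| exact isoA]. Qed.

End Main.

Theorem theorem3p17 (R : NURing) (S : R -> Prop) (HS : is_subring R S)
  (E : R -> Prop) (HE : local_units R E)
  (Hjoin : forall e1 e2, E e1 -> E e2 ->
      E (radd (radd e1 e2) (ropp (rmul e1 e2))))
  (Hmeet : forall e1 e2, E e1 -> E e2 -> E (rmul e1 e2))
  (H1 : local_units (subNURing HS) (fun x => E (proj1_sig x)))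
  (H2 : forall e, E e -> S e -> forall x,
      (exists y, S y /\ x = rmul (rmul e y) e) <-> (exists y, x = rmul (rmul e y) e))
  (H3 : forall e, E e -> exists (I : Type) (ei : I -> R),
      (forall i, E (ei i) /\ S (ei i)) /\ surj_hom_from_dsum ei e) :
  Morita_equivalent (subNURing HS) R.
Proof.
  exact (@morita R S HS E HE Hjoin H1 H2 H3).
Qed.
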